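(* Let $p$ be an odd prime and let $P$ be the Paley matrix of order $p$. Then the $p^2\times p^2$ matrix \[H=P\otimes P+J\otimes I+\omega\, I\otimes J\] is a $BH(p^2,6)$ matrix, i.e. a complex Hadamard matrix of order $p^2$ all of whose entries are sixth roots of unity.
   Context: $\omega=e^{2\pi i/3}$. $I$ and $J$ denote the $p\times p$ identity and all-ones matrices, and $\otimes$ is the Kronecker product. The Paley matrix of order $p$ is the circulant matrix $P$ with $P_{i,j}=\chi(j-i)$ for $i,j\in\mathbb{Z}_p$, where $\chi(0)=0$, $\chi(k)=1$ if $k$ is a nonzero quadratic residue mod $p$ and $\chi(k)=-1$ otherwise. A complex Hadamard matrix of order $n$ is an $n\times n$ matrix with unimodular entries satisfying $HH^\ast=nI_n$; $BH(n,q)$ denotes such a matrix whose entries are $q$-th roots of unity. *)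

(* Defs.v *)
(* complex numbers are the algebraic numbers algC. *)
From HB Require Import structures.
From mathcomp Require Import all_boot all_order all_algebra algC.
Set Implicit Arguments. Unset Strict Implicit. Unset Printing Implicit Defensive.
Import Order.TTheory GRing.Theory Num.Theory.
Local Open Scope ring_scope.

(* omega = e^{2 pi i/3} = (-1 + i sqrt 3)/2 *)
Definition omega : algC := (-1 + 'i * sqrtC 3%:R) / 2%:R.

Definition chi (p : nat) (k : nat) : algC :=
  if (k %% p == 0)%N then 0
  else if [exists x : 'I_p, ((x * x) %% p == k %% p)%N] then 1 else -1.

Definition paley (p : nat) : 'M[algC]_p :=
  \matrix_(i < p, j < p) chi p (j + p - i)%N.

(* Kronecker product, rows/columns indexed by pairs in lexicographic order
   (the same indexing as mxvec_index). *)
Definition kron_idx (m n : nat) (k : 'I_(m * n)) : 'I_m * 'I_n :=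
  enum_val (cast_ord (esym (mxvec_cast m n)) k).

Definition kron (m1 n1 m2 n2 : nat) (A : 'M[algC]_(m1, n1)) (B : 'M[algC]_(m2, n2))
  : 'M[algC]_(m1 * m2, n1 * n2) :=
  \matrix_(k, l) (A (kron_idx k).1 (kron_idx l).1 * B (kron_idx k).2 (kron_idx l).2).

Definition adjmx (m n : nat) (A : 'M[algC]_(m, n)) : 'M[algC]_(n, m) :=
  map_mx (fun x => x^*) A^T.

Definition complex_hadamard (n : nat) (H : 'M[algC]_n) : Prop :=
  (forall i j, `|H i j| = 1) /\ H *m adjmx H = n%:R%:M.

Definition butson_hadamard (n q : nat) (H : 'M[algC]_n) : Prop :=
  complex_hadamard H /\ (forall i j, (H i j) ^+ q = 1).

(* Main.v *)
Require Import Defs.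
From HB Require Import structures.
From mathcomp Require Import all_boot all_order all_algebra algC.
From mathcomp Require Import ring lra.
Import Order.TTheory GRing.Theory Num.Theory.
Local Open Scope ring_scope.

Lemma sq3 : sqrtC (3%:R : algC) ^+ 2 = 3%:R. Proof. exact: sqrtCK. Qed.
Lemma conj_s3 : (sqrtC (3%:R : algC))^* = sqrtC 3%:R.
Proof. by apply: conj_Creal; apply: sqrtC_real; rewrite ler0n. Qed.
Lemma ii : ('i : algC) ^+ 2 = -1. Proof. exact: sqrCi. Qed.

Lemma omega_conj : omega^* = (-1 - 'i * sqrtC 3%:R) / 2%:R.
Proof. rewrite /omega fmorph_div rmorphD rmorphN rmorph1 rmorphM. rewrite /=. rewrite conjCi conj_s3 rmorph_nat. by rewrite mulNr. Qed.

Lemma omega_sum : omega + omega^* = -1.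
Proof. rewrite omega_conj /omega; by field. Qed.

Lemma omega_norm : omega * omega^* = 1.
Proof. rewrite omega_conj /omega. have h1 := sq3. have h2 := ii.
 rewrite mulrC -[LHS]/(((-1 - 'i * sqrtC 3%:R) / 2%:R) * ((-1 + 'i * sqrtC 3%:R) / 2%:R)).
 have -> : ((-1 - 'i * sqrtC 3%:R) / 2%:R) * ((-1 + 'i * sqrtC 3%:R) / 2%:R) = (1 - ('i)^+2 * (sqrtC (3%:R:algC))^+2) / 4%:R :> algC.
   by field.
 by rewrite h1 h2; field.
Qed.

Lemma omega_quad : omega ^+ 2 + omega + 1 = 0.
Proof. rewrite /omega. have h1 := sq3. have h2 := ii.
 have -> : ((-1 + 'i * sqrtC 3%:R) / 2%:R) ^+ 2 + (-1 + 'i * sqrtC 3%:R) / 2%:R + 1 = (3%:R + ('i)^+2 * (sqrtC (3%:R:algC))^+2) / 4%:R :> algC.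
   by field.
 by rewrite h1 h2; field.
Qed.

Lemma omega3 : omega ^+ 3 = 1.
Proof. apply/eqP; rewrite -subr_eq0.
 have -> : omega ^+ 3 - 1 = (omega - 1) * (omega ^+ 2 + omega + 1) by ring.
 by rewrite omega_quad mulr0. Qed.

Lemma omega6 : omega ^+ 6 = 1.
Proof. by rewrite (_ : 6 = 3 * 2)%N // exprM omega3 expr1n. Qed.

Lemma omega1_6 : (1 + omega) ^+ 6 = 1.
Proof. have -> : 1 + omega = - omega ^+ 2.
   by apply/eqP; rewrite -subr_eq0 opprK; rewrite -omega_quad; apply/eqP; ring.
 rewrite (_ : (-omega^+2)^+6 = omega ^+ 12); last by ring.
 by rewrite (_ : 12 = 6*2)%N // exprM omega6 expr1n.
Qed.

Lemma norm_omega : `|omega| = 1.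
Proof. have h : `|omega| ^+ 2 = 1 by rewrite normCK omega_norm.
 have h0 : 0 <= `|omega| by [].
 apply/eqP; rewrite -(@eqrXn2 _ 2) // ?expr1n ?h //. Qed.


Section NT.
Variables (p : nat) (hp : prime p) (hodd : odd p).

Definition sqc (x : 'F_p) : algC := \sum_(y : 'F_p) (y * y == x)%:R.
Definition chiF (x : 'F_p) : algC := sqc x - 1.

Lemma two_neq0 : (2%:R : 'F_p) != 0.
Proof.
rewrite -(dvdn_pcharf (pchar_Fp hp)); apply/negP => /dvdn_leq h.
have := prime_gt1 hp; have := h isT.
by case: p hodd => [|[|[|]]].
Qed.

Lemma shift_sum (f : 'F_p -> algC) a : \sum_x f (x + a) = \sum_x f x.
Proof. by rewrite [RHS](reindex_inj (addIr a)). Qed.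

Lemma sum_eq1 (T : finType) (c : T) : \sum_(y : T) ((y == c)%:R : algC) = 1.
Proof.
rewrite (bigD1 c) //= eqxx big1 ?addr0 // => y /negbTE -> //.
Qed.

Lemma sum_sqc : \sum_x sqc x = p%:R.
Proof.
rewrite /sqc exchange_big /=.
rewrite (eq_bigr (fun _ => 1)); first by rewrite sumr_const (card_Fp hp).
move=> y _; rewrite (eq_bigr (fun x => ((x == y * y)%:R : algC))) ?sum_eq1 // => x _.
by rewrite eq_sym.
Qed.

Lemma sum_sqc_shift t : \sum_x sqc (x + t) = p%:R.
Proof. by rewrite (shift_sum sqc) sum_sqc. Qed.

Lemma solve_lin (u t y : 'F_p) : u != 0 -> (u * (2%:R * y + u) == t) = (y == (t / u - u) / 2%:R).
Proof.
move=> hu; have h2 := two_neq0.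
apply/eqP/eqP => [h|->]; [rewrite -h|]; field; by rewrite h2 hu.
Qed.

Lemma sum_sqc2 t : \sum_x sqc x * sqc (x + t) = (p.-1)%:R + (t == 0)%:R * p%:R.
Proof.
rewrite /sqc.
transitivity (\sum_(y : 'F_p) \sum_(z : 'F_p) ((z * z == y * y + t)%:R : algC)).
  under eq_bigr => x _ do rewrite mulr_suml.
  rewrite exchange_big /=; apply: eq_bigr => y _.
  under eq_bigr => x _ do rewrite mulr_sumr.
  rewrite exchange_big /=; apply: eq_bigr => z _.
  rewrite (bigD1 (y * y)) //= eqxx mul1r big1 ?addr0 // => x /negbTE.
  by rewrite eq_sym => ->; rewrite mul0r.
transitivity (\sum_(y : 'F_p) \sum_(u : 'F_p) ((u * (2%:R * y + u) == t)%:R : algC)).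
  apply: eq_bigr => y _.
  rewrite (reindex_inj (addrI y)) /=; apply: eq_bigr => u _.
  have -> : (y + u) * (y + u) = y * y + u * (2%:R * y + u) by ring.
  by rewrite (inj_eq (addrI _)).
rewrite exchange_big /= (bigD1 0) //=.
under eq_bigr => y _ do rewrite mul0r.
rewrite sumr_const (card_Fp hp).
under eq_bigr => u hu.
  rewrite (eq_bigr (fun y => ((y == (t / u - u) / 2%:R)%:R : algC))); last first.
    by move=> y _; rewrite solve_lin.
  rewrite sum_eq1.
  over.
rewrite sumr_const cardC1 (card_Fp hp) eq_sym -mulr_natr addrC.
by rewrite mul1r mulr_natr. Qed.

Lemma sum_chiF : \sum_x chiF x = 0.
Proof. by rewrite /chiF sumrB sum_sqc sumr_const (card_Fp hp) subrr. Qed.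

Lemma sum_chiF2 t : \sum_x chiF x * chiF (x + t) = (t == 0)%:R * p%:R - 1.
Proof.
rewrite /chiF.
rewrite (eq_bigr (fun x => sqc x * sqc (x+t) - sqc x - sqc (x + t) + 1)); last by move=> x _; ring.
rewrite !big_split /= !sumrN sum_sqc2 sum_sqc sum_sqc_shift sumr_const (card_Fp hp).
have hp0 : (0 < p)%N by exact: prime_gt0.
move: ((t == 0)%:R : algC) => b. rewrite -(prednK hp0) -addn1 natrD /=. rewrite addn1 /=. ring. Qed.



Lemma sqc0 : sqc 0 = 1.
Proof.
rewrite /sqc (eq_bigr (fun y => ((y == 0)%:R : algC))) ?sum_eq1 // => y _.
by rewrite mulf_eq0 orbb.
Qed.

Lemma sqc_sq y0 : y0 != 0 -> sqc (y0 * y0) = 2%:R.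
Proof.
move=> hy; rewrite /sqc.
have hn : - y0 != y0.
  apply/negP => /eqP h; move: hy; rewrite -[y0]mul1r.
  have : (2%:R : 'F_p) * y0 == 0 by rewrite mulr_natl mulr2n -{1}h addNr.
  by rewrite mulf_eq0 (negbTE two_neq0) /= mul1r => ->.
rewrite (bigD1 y0) //= eqxx (bigD1 (- y0)) //= mulrNN eqxx big1 ?addr0 //.
move=> y /andP [h1 h2]; rewrite -!expr2 eqf_sqr.
by rewrite (negbTE h1) (negbTE h2).
Qed.

Lemma sqc_nsq x : (forall y, y * y != x) -> sqc x = 0.
Proof. by move=> h; rewrite /sqc big1 // => y _; rewrite (negbTE (h y)). Qed.

Lemma natF_eq (a b : nat) : ((a%:R : 'F_p) == b%:R) = (a %% p == b %% p)%N.
Proof.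
apply/eqP/eqP => [h|h].
  by rewrite -!(val_Fp_nat hp) h.
by apply: val_inj; rewrite /= !(val_Fp_nat hp).
Qed.

Lemma chiE (m : nat) : chi p m = chiF (m%:R).
Proof.
rewrite /chi /chiF; case: ifP => hm.
  have -> : (m%:R : 'F_p) = 0.
    by apply/eqP; rewrite (_ : (0 : 'F_p) = 0%:R) // natF_eq (eqP hm) mod0n.
  by rewrite sqc0 subrr.
case: ifP => hex.
  case/existsP: hex => x /eqP hx.
  have hxx : (x%:R : 'F_p) * x%:R = m%:R by apply/eqP; rewrite -natrM natF_eq hx.
  have hx0 : (x%:R : 'F_p) != 0.
    apply/negP => /eqP h0; move: hxx; rewrite h0 mul0r => /esym /eqP.
    by rewrite (_ : (0 : 'F_p) = 0%:R) // natF_eq mod0n hm.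
  rewrite -hxx sqc_sq //. by rewrite (natrD _ 1 1); ring.
rewrite sqc_nsq ?sub0r // => y; apply/negP => /eqP hy.
have hlt : (val y < p)%N by rewrite -[X in (_ < X)%N](Fp_cast hp); exact: ltn_ord.
move/negbT/negP: hex; apply; apply/existsP; exists (Ordinal hlt) => /=.
by rewrite -(natF_eq (val y * val y) m) natrM natr_Zp hy.
Qed.


Lemma sumIp (f : 'F_p -> algC) : \sum_(k < p) f (k%:R) = \sum_x f x.
Proof.
rewrite [RHS](eq_bigr (fun x : 'F_p => f ((val x)%:R))); last by move=> x _; rewrite natr_Zp.
rewrite -(big_mkord xpredT (fun k => f k%:R)).
rewrite -[in RHS](big_mkord xpredT (fun k => f k%:R)).
by rewrite (Fp_cast hp).
Qed.

Lemma natF_sub (i k : 'I_p) : (((k + p - i)%N)%:R : 'F_p) = k%:R - i%:R.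
Proof.
by rewrite -addnBA ?(ltnW (ltn_ord i)) // natrD natrB ?(ltnW (ltn_ord i)) // (pchar_Fp_0 hp) sub0r.
Qed.

Lemma paleyE (i k : 'I_p) : paley p i k = chiF ((k : nat)%:R - (i : nat)%:R).
Proof. by rewrite mxE chiE natF_sub. Qed.

Lemma paley_row (i : 'I_p) : \sum_k paley p i k = 0.
Proof.
under eq_bigr => k _ do rewrite paleyE.
rewrite (sumIp (fun x => chiF (x - i%:R))).
by rewrite (shift_sum chiF) sum_chiF.
Qed.

Lemma natF_eqI (i j : 'I_p) : (((i : nat)%:R : 'F_p) == (j : nat)%:R) = (i == j).
Proof. by rewrite natF_eq !modn_small. Qed.

Lemma paley_ortho (i j : 'I_p) :
  \sum_k paley p i k * paley p j k = (i == j)%:R * p%:R - 1.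
Proof.
under eq_bigr => k _ do rewrite !paleyE.
rewrite (sumIp (fun x => chiF (x - i%:R) * chiF (x - j%:R))).
rewrite -(shift_sum _ i%:R).
rewrite (eq_bigr (fun x => chiF x * chiF (x + (i%:R - j%:R)))); last first.
  by move=> x _; rewrite addrK; congr (_ * chiF _); ring.
by rewrite sum_chiF2 subr_eq0 natF_eqI.
Qed.




Lemma kron_idx_bij m n : bijective (@kron_idx m n).
Proof.
exists (fun x => cast_ord (mxvec_cast m n) (enum_rank x)).
  by move=> k; rewrite /kron_idx enum_valK cast_ordKV.
by move=> x; rewrite /kron_idx cast_ordK enum_rankK.
Qed.

Lemma kron_idx_inj m n : injective (@kron_idx m n).
Proof. exact: bij_inj (kron_idx_bij m n). Qed.

Lemma sum_kron m n (F : 'I_m -> 'I_n -> algC) :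
  \sum_(k : 'I_(m * n)) F (kron_idx k).1 (kron_idx k).2 = \sum_i \sum_j F i j.
Proof.
rewrite pair_big /=.
rewrite (reindex (@kron_idx m n)) //.
by apply: onW_bij; exact: kron_idx_bij.
Qed.

Lemma kronE m1 n1 m2 n2 (A : 'M[algC]_(m1, n1)) (B : 'M[algC]_(m2, n2)) k l :
  kron A B k l = A (kron_idx k).1 (kron_idx l).1 * B (kron_idx k).2 (kron_idx l).2.
Proof. by rewrite mxE. Qed.

Lemma kron_mul m1 n1 p1 m2 n2 p2 (A : 'M[algC]_(m1, n1)) (B : 'M[algC]_(m2, n2))
  (C : 'M[algC]_(n1, p1)) (D : 'M[algC]_(n2, p2)) :
  kron A B *m kron C D = kron (A *m C) (B *m D).
Proof.
apply/matrixP => k l; rewrite kronE !mxE.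
under eq_bigr => e _ do rewrite !kronE.
rewrite (@sum_kron _ _ (fun i j => A (kron_idx k).1 i * B (kron_idx k).2 j * (C i (kron_idx l).1 * D j (kron_idx l).2))).
rewrite big_distrlr /=; apply: eq_bigr => i _; apply: eq_bigr => j _.
ring.
Qed.

Lemma kron0l m1 n1 m2 n2 (B : 'M[algC]_(m2, n2)) : kron (0 : 'M[algC]_(m1, n1)) B = 0.
Proof. by apply/matrixP => k l; rewrite kronE !mxE mul0r. Qed.

Lemma kron0r m1 n1 m2 n2 (A : 'M[algC]_(m1, n1)) : kron A (0 : 'M[algC]_(m2, n2)) = 0.
Proof. by apply/matrixP => k l; rewrite kronE !mxE mulr0. Qed.

Lemma kron_idx_eq n (k l : 'I_(n * n)) :
  (k == l) = ((kron_idx k).1 == (kron_idx l).1) && ((kron_idx k).2 == (kron_idx l).2).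
Proof. by rewrite -xpair_eqE -!surjective_pairing (inj_eq (@kron_idx_inj n n)). Qed.


Lemma chi_cond (i j : 'I_p) : ((j + p - i) %% p == 0)%N = (i == j).
Proof.
have := natF_eq (j + p - i) 0; rewrite mod0n => <-.
by rewrite natF_sub (_ : (0%:R : 'F_p) = 0) // subr_eq0 natF_eqI eq_sym.
Qed.

Lemma paley_diag (i : 'I_p) : paley p i i = 0.
Proof. by rewrite mxE /chi chi_cond eqxx. Qed.

Lemma paley_pm (i j : 'I_p) : i != j -> paley p i j = 1 \/ paley p i j = -1.
Proof. by move=> h; rewrite mxE /chi chi_cond (negbTE h); case: ifP; auto. Qed.

Lemma paley_conj (i j : 'I_p) : (paley p i j)^* = paley p i j.
Proof. rewrite mxE /chi; case: ifP => _; first by rewrite rmorph0. by case: ifP => _; rewrite ?rmorphN rmorph1. Qed.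

Lemma PJ : paley p *m (const_mx 1 : 'M[algC]_p) = 0.
Proof.
apply/matrixP => i j; rewrite [LHS]mxE [RHS]mxE.
under eq_bigr => k _ do rewrite [const_mx 1 _ _]mxE mulr1.
exact: paley_row.
Qed.

Lemma JPt : (const_mx 1 : 'M[algC]_p) *m (paley p)^T = 0.
Proof.
apply/matrixP => i j; rewrite [LHS]mxE [RHS]mxE.
under eq_bigr => k _ do rewrite [const_mx 1 _ _]mxE [(paley p)^T _ _]mxE mul1r.
exact: paley_row.
Qed.

Lemma PPt : paley p *m (paley p)^T = \matrix_(i, j) (((i == j)%:R * p%:R - 1) : algC).
Proof.
apply/matrixP => i j; rewrite [LHS]mxE [RHS]mxE.
under eq_bigr => k _ do rewrite [(paley p)^T k j]mxE.
exact: paley_ortho.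
Qed.

Lemma JJ : (const_mx 1 : 'M[algC]_p) *m (const_mx 1 : 'M[algC]_p) = const_mx p%:R.
Proof.
apply/matrixP => i j; rewrite !mxE.
under eq_bigr => k _ do rewrite !mxE mul1r.
by rewrite sumr_const card_ord.
Qed.

Definition Hm : 'M[algC]_(p * p) :=
  kron (paley p) (paley p)
     + kron (const_mx 1 : 'M[algC]_p) (1%:M : 'M[algC]_p)
     + omega *: kron (1%:M : 'M[algC]_p) (const_mx 1 : 'M[algC]_p).

Lemma adjH : adjmx Hm = kron (paley p)^T (paley p)^T
     + kron (const_mx 1 : 'M[algC]_p) (1%:M : 'M[algC]_p)
     + omega^* *: kron (1%:M : 'M[algC]_p) (const_mx 1 : 'M[algC]_p).
Proof.
apply/matrixP => k l; rewrite /adjmx /Hm.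
have hP := paley_conj; move: (paley p) hP => P hP.
rewrite !mxE.
rewrite !rmorphD !rmorphM /= !hP !rmorph1 !rmorph_nat.
by rewrite (eq_sym (kron_idx l).1) (eq_sym (kron_idx l).2).
Qed.

Definition Q (x : algC) := x ^+ 6 = 1 /\ `|x| = 1.

Lemma Q_entry k l : Q (Hm k l).
Proof.
have Q1 : Q 1 by split; rewrite ?expr1n ?normr1.
have Qm1 : Q (-1) by split; rewrite ?normrN1 // -signr_odd.
have Qw : Q omega by split; [exact: omega6 | exact: norm_omega].
have Q1w : Q (1 + omega).
  split; first exact: omega1_6.
  have -> : 1 + omega = - omega ^+ 2.
    by apply/eqP; rewrite -subr_eq0 opprK; rewrite -omega_quad; apply/eqP; ring.
  by rewrite normrN normrX norm_omega expr1n.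
rewrite /Hm.
have hd := paley_diag; have hpm := paley_pm; move: (paley p) hd hpm => P hd hpm.
rewrite !mxE !mulr1 !mul1r.
set a := (kron_idx k).1; set c := (kron_idx l).1.
set b := (kron_idx k).2; set d := (kron_idx l).2.
case: (eqVneq a c) => [<-|hac].
  rewrite hd mul0r add0r mulr1.
  by case: (eqVneq b d); rewrite /= ?add0r.
rewrite mulr0 addr0.
case: (eqVneq b d) => [<-|hbd].
  by rewrite hd mulr0 add0r.
rewrite addr0.
by case: (hpm _ _ hac) => ->; case: (hpm _ _ hbd) => ->; rewrite ?mulr1 ?mulrN1 ?opprK.
Qed.

Lemma HH : Hm *m adjmx Hm = (p * p)%:R%:M.
Proof.
rewrite adjH {1}/Hm !mulmxDl !mulmxDr -!scalemxAl -!scalemxAr !kron_mul.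
rewrite !mulmx1 !mul1mx PJ JPt !kron0l !kron0r !scaler0 !addr0 !add0r PPt JJ.
apply/matrixP => k l; rewrite !mxE kron_idx_eq.
rewrite natrM.
set x := ((kron_idx k).1 == (kron_idx l).1).
set y := ((kron_idx k).2 == (kron_idx l).2).
rewrite -[RHS]mulr_natr -mulnb natrM.
apply/eqP; rewrite -subr_eq0; apply/eqP.
transitivity ((omega + omega^* + 1) + (omega * omega^* - 1) * (x%:R * p%:R)); first ring.
by rewrite omega_sum omega_norm subrr addNr mul0r addr0.
Qed.

End NT.


Theorem theorem1 (p : nat) (hp : prime p) (hodd : odd p) :
  butson_hadamard 6
    (kron (paley p) (paley p)
     + kron (const_mx 1 : 'M[algC]_p) (1%:M : 'M[algC]_p)
     + omega *: kron (1%:M : 'M[algC]_p) (const_mx 1 : 'M[algC]_p)).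
Proof.
have HQ := @Q_entry p hp.
have HHp := @HH p hp hodd.
rewrite /Hm in HQ HHp.
split; [split|].
- by move=> i j; case: (HQ i j).
- exact: HHp.
- by move=> i j; case: (HQ i j).
Qed.
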